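(* Let $G$ be a finitely presented group and $\varphi:G\twoheadrightarrow\mathbb{Z}$ an epimorphism. Then: (1) $\mathrm{grank}(\varphi)=0$ if and only if $[\varphi]\in\Sigma(G)$; (2) $\mathrm{grank}(\varphi)=0$ and $\mathrm{grank}(-\varphi)=0$ if and only if $\ker\varphi$ is finitely generated.
   Context: An associated HNN-extension of $(G,\varphi)$ is a tuple $(B,A,t,\alpha)$ with: - $A\subseteq B\subseteq\ker\varphi$ finitely generated subgroups of $G$; - $\alpha:A\to B$ a monomorphism; - $t\in G$ with $\varphi(t)=1$; - $G=\langle t,B\mid A=t^{-1}\alpha(A)t\rangle$, i.e. $G$ is the HNN extension of $B$ along $\alpha$, meaning $t^{-1}\alpha(a)t=a$ for $a\in A$. For such an extension, $\mathrm{grank}(B,A)$ is the minimal number $k$ of elements $b_1,\dots,b_k$ with $B=\langle b_1,\dots,b_k,A\rangle$. $\mathrm{grank}(\varphi)$ is the minimum of $\mathrm{grank}(B,A)$ over all associated HNN-extensions of $(G,\varphi)$. $S(G)$ is the set of non-trivial homomorphisms $G\to\mathbb{R}$ modulo positive scalars, and $[\varphi]$ is the class of $\varphi$. The Bieri–Neumann–Strebel invariant $\Sigma(G)\subseteq S(G)$ is defined as follows. Fix a finite generating set and its Cayley graph $\mathcal{G}$, with $G$ acting on the left. Extend $\varphi$ linearly over edges to $\tilde\varphi:\mathcal{G}\to\mathbb{R}$. Let $\mathcal{G}_\varphi$ be the maximal subgraph inside $\tilde\varphi^{-1}(-\infty,0]$. Then $[\varphi]\in\Sigma(G)$ iff $\mathcal{G}_\varphi$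 is connected, which is independent of the choices. *)

(* Defs.v *)
From Stdlib Require Import ZArith List Relations.
Open Scope Z_scope.

Record Group := {
  carrier :> Type;
  gmul : carrier -> carrier -> carrier;
  gone : carrier;
  ginv : carrier -> carrier;
  gmulA : forall x y z, gmul x (gmul y z) = gmul (gmul x y) z;
  gmul1l : forall x, gmul gone x = x;
  gmulVl : forall x, gmul (ginv x) x = gone
}.

Arguments gmul {g}.
Arguments gone {g}.
Arguments ginv {g}.

Inductive gen {G : Group} (X : G -> Prop) : G -> Prop :=
| gen_base x : X x -> gen X x
| gen_one : gen X gone
| gen_mul x y : gen X x -> gen X y -> gen X (gmul x y)
| gen_inv x : gen X x -> gen X (ginv x).

Definition is_subgroup {G : Group} (P : G -> Prop) : Prop :=
  P gone /\ (forall x y, P x -> P y -> P (gmul x y)) /\ (forall x, P x -> P (ginv x)).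

Definition fg_subgroup {G : Group} (P : G -> Prop) : Prop :=
  is_subgroup P /\ exists l : list G, forall g, P g <-> gen (fun x => In x l) g.

Definition is_hom {G H : Group} (F : G -> H) : Prop :=
  forall a b, F (gmul a b) = gmul (F a) (F b).

Definition is_Zhom {G : Group} (phi : G -> Z) : Prop :=
  forall a b, phi (gmul a b) = phi a + phi b.

Definition epi_Z {G : Group} (phi : G -> Z) : Prop :=
  is_Zhom phi /\ forall z : Z, exists g, phi g = z.

(* words in generators indexed by nat; (i, true) = s_i, (i, false) = s_i^-1 *)
Definition word := list (nat * bool).

Fixpoint eval_word {H : Group} (x : nat -> H) (w : word) : H :=
  match w with
  | nil => gone
  | (i, b) :: w' => gmul (if b then x i else ginv (x i)) (eval_word x w')
  end.

(* G = < s_0, ..., s_{n-1} | rels >, as a universal property *)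
Definition finitely_presented (G : Group) : Prop :=
  exists (n : nat) (s : nat -> G) (rels : list word),
    (forall r, In r rels -> forall i b, In (i, b) r -> (i < n)%nat) /\
    (forall g, gen (fun x => exists i, (i < n)%nat /\ x = s i) g) /\
    (forall r, In r rels -> eval_word s r = gone) /\
    (forall (H : Group) (x : nat -> H),
        (forall r, In r rels -> eval_word x r = gone) ->
        exists F : G -> H, is_hom F /\ forall i, (i < n)%nat -> F (s i) = x i) /\
    (forall (H : Group) (F1 F2 : G -> H), is_hom F1 -> is_hom F2 ->
        (forall i, (i < n)%nat -> F1 (s i) = F2 (s i)) -> forall g, F1 g = F2 g).

Definition assoc_HNN {G : Group} (phi : G -> Z)
    (B A : G -> Prop) (t : G) (alpha : G -> G) : Prop :=
  fg_subgroup B /\ fg_subgroup A /\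
  (forall a, A a -> B a) /\ (forall b, B b -> phi b = 0) /\
  (forall a, A a -> B (alpha a)) /\
  (forall a b, A a -> A b -> alpha (gmul a b) = gmul (alpha a) (alpha b)) /\
  (forall a b, A a -> A b -> alpha a = alpha b -> a = b) /\
  phi t = 1 /\
  (forall a, A a -> gmul (gmul (ginv t) (alpha a)) t = a) /\
  (forall g, gen (fun x => B x \/ x = t) g) /\
  (* universal property of the HNN extension <t, B | t^-1 alpha(a) t = a> *)
  (forall (H : Group) (f : G -> H) (h : H),
      (forall b c, B b -> B c -> f (gmul b c) = gmul (f b) (f c)) ->
      (forall a, A a -> gmul (gmul (ginv h) (f (alpha a))) h = f a) ->
      (exists F : G -> H, is_hom F /\ (forall b, B b -> F b = f b) /\ F t = h) /\
      (forall F1 F2 : G -> H, is_hom F1 -> is_hom F2 ->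
         (forall b, B b -> F1 b = F2 b) -> F1 t = F2 t -> forall g, F1 g = F2 g)).

Definition grank_BA_is {G : Group} (B A : G -> Prop) (k : nat) : Prop :=
  (exists l : list G, length l = k /\
     forall g, B g <-> gen (fun x => In x l \/ A x) g) /\
  (forall l : list G, (forall g, B g <-> gen (fun x => In x l \/ A x) g) ->
     (k <= length l)%nat).

Definition grank_is {G : Group} (phi : G -> Z) (k : nat) : Prop :=
  (exists B A t alpha, assoc_HNN phi B A t alpha /\ grank_BA_is B A k) /\
  (forall B A t alpha k', assoc_HNN phi B A t alpha -> grank_BA_is B A k' ->
     (k <= k')%nat).

(* One step in the Cayley graph (w.r.t. generating list S, left action):
   g -- g s for s in S; the edge lies in the maximal subgraph of
   phi~^-1(-oo,0] iff both endpoints have phi <= 0 (phi~ is affine on edges). *)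
Definition neg_step {G : Group} (S : list G) (phi : G -> Z) (g h : G) : Prop :=
  phi g <= 0 /\ phi h <= 0 /\
  exists s, In s S /\ (h = gmul g s \/ g = gmul h s).

Definition cayley_neg_connected {G : Group} (S : list G) (phi : G -> Z) : Prop :=
  forall g h, phi g <= 0 -> phi h <= 0 ->
    clos_refl_trans G (neg_step S phi) g h.

(* [phi] in Sigma(G): G_phi is connected, for the Cayley graph of a finite
   generating set (independent of the choice; we quantify over all). *)
Definition in_Sigma {G : Group} (phi : G -> Z) : Prop :=
  forall S : list G, (forall g, gen (fun x => In x S) g) ->
    cayley_neg_connected S phi.

(* Main.v *)
Require Import Defs.
From Stdlib Require Import ZArith List Relations Lia.
From Stdlib Require Import ClassicalEpsilon.
Open Scope Z_scope.


Infix "⋅" := gmul (at level 40, left associativity).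

Section Basics.
Variable G : Group.
Implicit Types x y z : G.

Lemma mulVr x : x ⋅ ginv x = gone.
Proof.
  rewrite <- (gmul1l _ (x ⋅ ginv x)).
  rewrite <- (gmulVl _ (ginv x)) at 1.
  rewrite <- gmulA. rewrite (gmulA _ (ginv x) x (ginv x)). rewrite gmulVl, gmul1l.
  apply gmulVl.
Qed.

Lemma mul1r x : x ⋅ gone = x.
Proof. rewrite <- (gmulVl _ x), gmulA, mulVr, gmul1l. reflexivity. Qed.

Lemma mulKl x y : ginv x ⋅ (x ⋅ y) = y.
Proof. rewrite gmulA, gmulVl, gmul1l; reflexivity. Qed.
Lemma mulKr x y : x ⋅ (ginv x ⋅ y) = y.
Proof. rewrite gmulA, mulVr, gmul1l; reflexivity. Qed.

Lemma mul_cancel_l x y z : x ⋅ y = x ⋅ z -> y = z.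
Proof. intro H. rewrite <- (mulKl x y), H, mulKl. reflexivity. Qed.
Lemma mul_cancel_r x y z : y ⋅ x = z ⋅ x -> y = z.
Proof. intro H. rewrite <- (mul1r y), <- (mulVr x), gmulA, H, <- gmulA, mulVr, mul1r. reflexivity. Qed.

Lemma inv_uniq x y : x ⋅ y = gone -> y = ginv x.
Proof. intro H. apply (mul_cancel_l x). rewrite H, mulVr. reflexivity. Qed.

Lemma ginvK x : ginv (ginv x) = x.
Proof. symmetry. apply inv_uniq. apply gmulVl. Qed.

Lemma ginv_mul x y : ginv (x ⋅ y) = ginv y ⋅ ginv x.
Proof. symmetry. apply inv_uniq. rewrite <- gmulA, (gmulA _ y), mulVr, gmul1l, mulVr. reflexivity. Qed.

Lemma ginv1 : ginv (@gone G) = gone.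
Proof. symmetry. apply inv_uniq. apply gmul1l. Qed.

End Basics.

Hint Rewrite <- gmulA : grp.
Hint Rewrite gmul1l mul1r gmulVl mulVr mulKl mulKr ginvK ginv_mul ginv1 : grp.
Ltac gs := autorewrite with grp; try reflexivity.

Fixpoint pw {G : Group} (u : G) (n : nat) : G :=
  match n with O => gone | S n => pw u n ⋅ u end.

Section Pw.
Variable G : Group.
Implicit Types x y z u : G.

Lemma pw_add u m n : pw u (m + n) = pw u m ⋅ pw u n.
Proof. induction n; simpl. - rewrite Nat.add_0_r; gs. - rewrite <- plus_n_Sm; simpl. rewrite IHn; gs. Qed.

Lemma pw_Sl u n : pw u (S n) = u ⋅ pw u n.
Proof. change (S n) with (1 + n)%nat. rewrite pw_add. simpl. gs. Qed.

Lemma zhom1 (phi : G -> Z) : is_Zhom phi -> phi gone = 0.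
Proof. intro H. pose proof (H gone gone). rewrite gmul1l in H0. lia. Qed.

Lemma zhomV (phi : G -> Z) x : is_Zhom phi -> phi (ginv x) = - phi x.
Proof. intro H. pose proof (H (ginv x) x). rewrite gmulVl, zhom1 in H0 by auto. lia. Qed.

Lemma zhom_pw (phi : G -> Z) u n : is_Zhom phi -> phi (pw u n) = Z.of_nat n * phi u.
Proof. intro H. induction n; cbn [pw]. - rewrite zhom1; auto. - rewrite H, IHn. rewrite Nat2Z.inj_succ. lia. Qed.

End Pw.


Lemma hom1 (G H : Group) (F : G -> H) : is_hom F -> F gone = gone.
Proof. intro HF. apply (mul_cancel_l _ (F gone)). rewrite <- HF, !gmul1l, mul1r. reflexivity. Qed.

Lemma homV (G H : Group) (F : G -> H) x : is_hom F -> F (ginv x) = ginv (F x).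
Proof. intro HF. apply inv_uniq. rewrite <- HF, mulVr. apply hom1; auto. Qed.

Lemma gen_sub (G : Group) (P : G -> Prop) : is_subgroup P -> forall g, gen P g -> P g.
Proof. intros [P1 [Pm Pi]] g Hg. induction Hg; auto. Qed.

Lemma gen_mono (G : Group) (P Q : G -> Prop) : (forall x, P x -> Q x) -> forall g, gen P g -> gen Q g.
Proof. intros HPQ g Hg. induction Hg; [apply gen_base; auto|apply gen_one|apply gen_mul; auto|apply gen_inv; auto]. Qed.

Lemma gen_is_subgroup (G : Group) (P : G -> Prop) : is_subgroup (gen P).
Proof. split; [apply gen_one|split; [apply gen_mul|apply gen_inv]]. Qed.

Section NF.
Variable G : Group.
Variable t : G.
Variable B : G -> Prop.
Hypothesis HBsub : is_subgroup B.
Hypothesis Hconj : forall b, B b -> B (t ⋅ b ⋅ ginv t).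
Hypothesis Hgen : forall g, gen (fun x => B x \/ x = t) g.

Lemma Bconj_pw r b : B b -> B (pw t r ⋅ b ⋅ ginv (pw t r)).
Proof.
  intro Hb. induction r.
  - simpl. destruct HBsub as [B1 [Bm Bi]]. assert (E: gone ⋅ b ⋅ ginv gone = b) by gs. rewrite E; auto.
  - rewrite pw_Sl. assert (E: t ⋅ pw t r ⋅ b ⋅ ginv (t ⋅ pw t r) = t ⋅ (pw t r ⋅ b ⋅ ginv (pw t r)) ⋅ ginv t) by gs.
    rewrite E. auto.
Qed.

Lemma NF g : exists p b q, B b /\ g = ginv (pw t p) ⋅ b ⋅ pw t q.
Proof.
  destruct HBsub as [B1 [Bm Bi]].
  induction (Hgen g) as [x [Hx| ->]| |x y _ [p [b [q [Hb ->]]]] _ [p' [b' [q' [Hb' ->]]]]|x _ [p [b [q [Hb ->]]]]].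
  - exists 0%nat, x, 0%nat. split; auto. simpl; gs.
  - exists 0%nat, gone, 1%nat. split; auto. simpl; gs.
  - exists 0%nat, gone, 0%nat. split; auto. simpl; gs.
  - destruct (le_lt_dec p' q) as [Hle|Hlt].
    + exists p, (b ⋅ (pw t (q - p') ⋅ b' ⋅ ginv (pw t (q - p')))), (q - p' + q')%nat.
      split. { apply Bm; auto. apply Bconj_pw; auto. }
      replace q with (q - p' + p')%nat at 1 by lia. set (r := (q - p')%nat).
      rewrite !pw_add; gs.
    + exists (p' - q + p)%nat, (pw t (p' - q) ⋅ b ⋅ ginv (pw t (p' - q)) ⋅ b'), q'.
      split. { apply Bm; auto. apply Bconj_pw; auto. }
      replace p' with (p' - q + q)%nat at 1 by lia. set (r := (p' - q)%nat).
      rewrite !pw_add; gs.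
  - exists q, (ginv b), p. split; auto. gs.
Qed.

Variable phi : G -> Z.
Hypothesis Hphi : is_Zhom phi.
Hypothesis Ht : phi t = 1.
Hypothesis HBker : forall b, B b -> phi b = 0.

Lemma phi_nf p b q : B b -> phi (ginv (pw t p) ⋅ b ⋅ pw t q) = Z.of_nat q - Z.of_nat p.
Proof. intro Hb. rewrite !Hphi. rewrite zhomV by auto. rewrite !zhom_pw by auto. rewrite (HBker b Hb). rewrite Ht. lia. Qed.

Section Univ.
Variable H : Group.
Variable f : G -> H.
Variable h : H.
Hypothesis fmul : forall b c, B b -> B c -> f (b ⋅ c) = f b ⋅ f c.
Hypothesis frel : forall a, B a -> ginv h ⋅ f (t ⋅ a ⋅ ginv t) ⋅ h = f a.

Lemma f1 : f gone = gone.
Proof. destruct HBsub as [B1 _]. apply (mul_cancel_l _ (f gone)). rewrite <- fmul by auto. gs. Qed.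

Lemma falpha a : B a -> f (t ⋅ a ⋅ ginv t) = h ⋅ f a ⋅ ginv h.
Proof. intro Ha. rewrite <- (frel a Ha). gs. Qed.

Lemma fconj r b : B b -> f (pw t r ⋅ b ⋅ ginv (pw t r)) = pw h r ⋅ f b ⋅ ginv (pw h r).
Proof.
  intro Hb. induction r.
  - simpl. assert (E: gone ⋅ b ⋅ ginv gone = b) by gs. rewrite E. gs.
  - rewrite !pw_Sl. assert (E: t ⋅ pw t r ⋅ b ⋅ ginv (t ⋅ pw t r) = t ⋅ (pw t r ⋅ b ⋅ ginv (pw t r)) ⋅ ginv t) by gs.
    rewrite E, falpha, IHr by (apply Bconj_pw; auto). gs.
Qed.

Lemma wd_le p b q p' b' q' : B b -> B b' -> (p <= p')%nat ->
  ginv (pw t p) ⋅ b ⋅ pw t q = ginv (pw t p') ⋅ b' ⋅ pw t q' ->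
  ginv (pw h p) ⋅ f b ⋅ pw h q = ginv (pw h p') ⋅ f b' ⋅ pw h q'.
Proof.
  intros Hb Hb' Hle E.
  assert (Eq: Z.of_nat q - Z.of_nat p = Z.of_nat q' - Z.of_nat p').
  { rewrite <- (phi_nf p b q Hb), <- (phi_nf p' b' q' Hb'). rewrite E. reflexivity. }
  assert (exists r, p' = (r + p)%nat) as [r ->] by (exists (p' - p)%nat; lia).
  assert (q' = (r + q)%nat) as -> by lia.
  rewrite !pw_add in E. autorewrite with grp in E.
  assert (Eb' : b' = pw t r ⋅ b ⋅ ginv (pw t r)).
  { apply (mul_cancel_l _ (ginv (pw t p))) in E.
    transitivity (pw t r ⋅ (ginv (pw t r) ⋅ (b' ⋅ (pw t r ⋅ pw t q))) ⋅ ginv (pw t q) ⋅ ginv (pw t r)).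
    - gs.
    - rewrite <- E. gs. }
  subst b'. rewrite fconj by auto. rewrite !pw_add. gs.
Qed.

Lemma wd p b q p' b' q' : B b -> B b' ->
  ginv (pw t p) ⋅ b ⋅ pw t q = ginv (pw t p') ⋅ b' ⋅ pw t q' ->
  ginv (pw h p) ⋅ f b ⋅ pw h q = ginv (pw h p') ⋅ f b' ⋅ pw h q'.
Proof.
  intros Hb Hb' E. destruct (le_lt_dec p p').
  - apply wd_le; auto.
  - symmetry. apply wd_le; auto. lia.
Qed.

Lemma nfs g : {x : nat * G * nat | B (snd (fst x)) /\
   g = ginv (pw t (fst (fst x))) ⋅ snd (fst x) ⋅ pw t (snd x)}.
Proof.
  apply constructive_indefinite_description.
  destruct (NF g) as [p [b [q [Hb E]]]]. exists (p, b, q). simpl. auto.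
Qed.

Definition Fu (g : G) : H :=
  ginv (pw h (fst (fst (proj1_sig (nfs g))))) ⋅ f (snd (fst (proj1_sig (nfs g))))
    ⋅ pw h (snd (proj1_sig (nfs g))).

Lemma Fu_eq p b q : B b -> Fu (ginv (pw t p) ⋅ b ⋅ pw t q) = ginv (pw h p) ⋅ f b ⋅ pw h q.
Proof.
  intro Hb. unfold Fu. destruct (nfs (ginv (pw t p) ⋅ b ⋅ pw t q)) as [[[p0 b0] q0] [Hb0 E0]].
  simpl in *. apply wd; auto.
Qed.

Lemma Fu_hom : is_hom Fu.
Proof.
  destruct HBsub as [B1 [Bm Bi]].
  intros g g'.
  destruct (NF g) as [p [b [q [Hb ->]]]]. destruct (NF g') as [p' [b' [q' [Hb' ->]]]].
  rewrite !Fu_eq by auto.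
  destruct (le_lt_dec p' q) as [Hle|Hlt].
  - assert (exists r, q = (r + p')%nat) as [r ->] by (exists (q - p')%nat; lia).
    assert (E: ginv (pw t p) ⋅ b ⋅ pw t (r + p') ⋅ (ginv (pw t p') ⋅ b' ⋅ pw t q') =
       ginv (pw t p) ⋅ (b ⋅ (pw t r ⋅ b' ⋅ ginv (pw t r))) ⋅ pw t (r + q')) by (rewrite !pw_add; gs).
    rewrite E, Fu_eq by (apply Bm; auto; apply Bconj_pw; auto).
    rewrite fmul, fconj by (auto; apply Bconj_pw; auto). rewrite !pw_add. gs.
  - assert (exists r, p' = (r + q)%nat) as [r ->] by (exists (p' - q)%nat; lia).
    assert (E: ginv (pw t p) ⋅ b ⋅ pw t q ⋅ (ginv (pw t (r + q)) ⋅ b' ⋅ pw t q') =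
       ginv (pw t (r + p)) ⋅ (pw t r ⋅ b ⋅ ginv (pw t r) ⋅ b') ⋅ pw t q') by (rewrite !pw_add; gs).
    rewrite E, Fu_eq by (apply Bm; auto; apply Bconj_pw; auto).
    rewrite fmul, fconj by (auto; apply Bconj_pw; auto). rewrite !pw_add. gs.
Qed.

Lemma Fu_B b : B b -> Fu b = f b.
Proof.
  intro Hb. transitivity (Fu (ginv (pw t 0) ⋅ b ⋅ pw t 0)).
  - f_equal. simpl. gs.
  - rewrite Fu_eq by auto. simpl. gs.
Qed.

Lemma Fu_t : Fu t = h.
Proof.
  destruct HBsub as [B1 [Bm Bi]].
  transitivity (Fu (ginv (pw t 0) ⋅ gone ⋅ pw t 1)).
  - f_equal. simpl. gs.
  - rewrite Fu_eq by auto. rewrite f1. simpl. gs.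
Qed.
End Univ.

Lemma uniq_ext (H : Group) (F1 F2 : G -> H) : is_hom F1 -> is_hom F2 ->
  (forall b, B b -> F1 b = F2 b) -> F1 t = F2 t -> forall g, F1 g = F2 g.
Proof.
  intros H1 H2 HB Ht' g. induction (Hgen g) as [x [Hx| ->]| |x y _ IH1 _ IH2|x _ IH].
  - auto.
  - auto.
  - rewrite !hom1; auto.
  - rewrite H1, H2, IH1, IH2. reflexivity.
  - rewrite homV, (homV _ _ F2), IH; auto.
Qed.

Hypothesis HBfg : fg_subgroup B.

Lemma asc_HNN : assoc_HNN phi B B t (fun b => t ⋅ b ⋅ ginv t).
Proof.
  unfold assoc_HNN. split; [auto|]. split; [auto|]. split; [auto|]. split; [auto|].
  split; [auto|]. split.
  { intros a b _ _. gs. }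
  split.
  { intros a b _ _ E. apply mul_cancel_r in E. apply mul_cancel_l in E. auto. }
  split; [auto|]. split.
  { intros a _. gs. }
  split; [auto|].
  intros H f h fmul frel. split.
  - exists (Fu H f h). split; [eapply Fu_hom; eauto|]. split.
    + intros b Hb. eapply Fu_B; eauto.
    + eapply Fu_t; eauto.
  - intros F1 F2 H1 H2 HB Ht'. apply uniq_ext; auto.
Qed.

Lemma grank0_of_asc : grank_is phi 0.
Proof.
  split.
  - exists B, B, t, (fun b => t ⋅ b ⋅ ginv t). split; [apply asc_HNN|].
    split.
    + exists nil. split; [reflexivity|]. intro g. split.
      * intro Hg. apply gen_base. auto.
      * intro Hg. apply gen_sub; [exact HBsub|]. revert Hg. apply gen_mono. intros x [[]|Hx]; auto.
    + intros; lia.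
  - intros; lia.
Qed.
End NF.


Lemma extract (G : Group) (psi : G -> Z) : is_Zhom psi -> grank_is psi 0 ->
  exists A t LA, is_subgroup A /\ (forall g, A g <-> gen (fun x => In x LA) g) /\
   (forall a, A a -> psi a = 0) /\ psi t = 1 /\ (forall a, A a -> A (t ⋅ a ⋅ ginv t)) /\
   (forall g, gen (fun x => A x \/ x = t) g).
Proof.
  intros Hpsi [[B [A [t [al [HH Hgr]]]]] _].
  destruct HH as (HBfg & [HAsub [LA HLA]] & HAB & HBker & HaB & Ham & Hai & Ht & Hrel & Hgen & _).
  destruct Hgr as [[l [Hl Heq]] _]. destruct l; [|discriminate].
  assert (HBA: forall g, B g -> A g).
  { intros g Hg. apply Heq in Hg. apply gen_sub; [auto|]. revert Hg. apply gen_mono. intros x [[]|Hx]; auto. }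
  exists A, t, LA. split; [auto|]. split; [auto|]. split; [auto|]. split; [auto|]. split.
  - intros a Ha. assert (E: t ⋅ a ⋅ ginv t = al a) by (rewrite <- (Hrel a Ha) at 1; gs).
    rewrite E. auto.
  - intro g. generalize (Hgen g). apply gen_mono. intros x [Hx|Hx]; auto.
Qed.

Section Sig.
Variable G : Group.
Variable psi : G -> Z.
Hypothesis Hpsi : is_Zhom psi.
Variable A : G -> Prop.
Variable t : G.
Variable LA : list G.
Hypothesis HAsub : is_subgroup A.
Hypothesis HLA : forall g, A g <-> gen (fun x => In x LA) g.
Hypothesis HAker : forall a, A a -> psi a = 0.
Hypothesis Ht : psi t = 1.
Hypothesis Hconj : forall a, A a -> A (t ⋅ a ⋅ ginv t).
Hypothesis Hgen : forall g, gen (fun x => A x \/ x = t) g.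

Variable SL : list G.
Hypothesis HS : forall g, gen (fun x => In x SL) g.

Notation C := (clos_refl_trans G (neg_step SL psi)).

Lemma C_sym x y : C x y -> C y x.
Proof.
  intro H. induction H.
  - apply rt_step. destruct H as [hx [hy [s [Hs E]]]]. split; [auto|]. split; [auto|]. exists s. split; [auto|]. destruct E; [right|left]; auto.
  - apply rt_refl.
  - eapply rt_trans; eauto.
Qed.

Lemma L1 z : exists d, 0 <= d /\ forall g, psi g <= - d -> C g (g ⋅ z).
Proof.
  induction (HS z) as [s Hs| |x y _ [dx [Hdx IHx]] _ [dy [Hdy IHy]]|x _ [dx [Hdx IHx]]].
  - exists (Z.max 0 (psi s)). split; [lia|]. intros g Hg. apply rt_step.
    split; [lia|]. split; [rewrite Hpsi; lia|]. exists s. auto.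
  - exists 0. split; [lia|]. intros g _. rewrite mul1r. apply rt_refl.
  - exists (Z.max dx (dy + psi x)). split; [lia|]. intros g Hg.
    eapply rt_trans; [apply IHx; lia|]. rewrite gmulA. apply IHy. rewrite Hpsi. lia.
  - exists (Z.max dx (dx - psi x)). split; [lia|]. intros g Hg.
    apply C_sym. assert (E: g = g ⋅ ginv x ⋅ x) by gs. rewrite E at 2. apply IHx.
    rewrite Hpsi, zhomV by auto. lia.
Qed.

Lemma L1list (L : list G) : exists d, 0 <= d /\ forall z, In z L -> forall g, psi g <= - d -> C g (g ⋅ z).
Proof.
  induction L as [|z L [d [Hd IH]]].
  - exists 0. split; [lia|]. intros z [].
  - destruct (L1 z) as [d' [Hd' H']]. exists (Z.max d d'). split; [lia|].
    intros z' [<-|Hz] g Hg; [apply H'|apply IH]; auto; lia.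
Qed.

Lemma nz_or (L : list G) : (exists s, In s L /\ psi s <> 0) \/ (forall s, In s L -> psi s = 0).
Proof.
  induction L as [|s L [IH|IH]].
  - right. intros s [].
  - left. destruct IH as [x [Hx Hx']]. exists x. simpl; auto.
  - destruct (Z.eq_dec (psi s) 0).
    + right. intros x [<-|Hx]; auto.
    + left. exists s. simpl; auto.
Qed.

Lemma ex_nz : exists s, In s SL /\ psi s <> 0.
Proof.
  destruct (nz_or SL) as [H|H]; auto.
  exfalso. assert (forall g, psi g = 0) as H0; [|specialize (H0 t); lia].
  intro g. induction (HS g) as [x Hx| |x y _ IH1 _ IH2|x _ IH].
  - auto.
  - apply zhom1; auto.
  - rewrite Hpsi. lia.
  - rewrite zhomV; auto; lia.
Qed.

Lemma lower (n : nat) g : psi g <= 0 -> exists g', psi g' <= - Z.of_nat n /\ C g g'.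
Proof.
  intro Hg. destruct ex_nz as [s [Hs Hs']]. induction n.
  - exists g. split; [lia|apply rt_refl].
  - destruct IHn as [g' [Hg' HC]]. destruct (Z_lt_le_dec (psi s) 0).
    + exists (g' ⋅ s). split; [rewrite Hpsi; lia|]. eapply rt_trans; [exact HC|].
      apply rt_step. split; [lia|]. split; [rewrite Hpsi; lia|]. exists s; auto.
    + exists (g' ⋅ ginv s). split; [rewrite Hpsi, zhomV by auto; lia|]. eapply rt_trans; [exact HC|].
      apply rt_step. split; [lia|]. split; [rewrite Hpsi, zhomV by auto; lia|]. exists s. split; auto.
      right. gs.
Qed.

Lemma sigma_of_asc : cayley_neg_connected SL psi.
Proof.
  destruct (L1list (t :: ginv t :: LA)) as [D [HD HL]].
  assert (Lt: forall g, psi g <= - D -> C g (g ⋅ t)) by (intros; apply HL; simpl; auto).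
  assert (Lti: forall g, psi g <= - D -> C g (g ⋅ ginv t)) by (intros; apply HL; simpl; auto).
  assert (L2: forall a, A a -> forall g, psi g <= - D -> C g (g ⋅ a)).
  { intros a Ha. apply HLA in Ha. induction Ha as [x Hx| |x y Hx IH1 Hy IH2|x Hx IH]; intros g Hg.
    - apply HL; simpl; auto.
    - rewrite mul1r. apply rt_refl.
    - eapply rt_trans; [apply IH1; auto|]. rewrite gmulA. apply IH2.
      rewrite Hpsi, (HAker x) by (apply HLA; auto). lia.
    - apply C_sym. assert (E: g = g ⋅ ginv x ⋅ x) by gs. rewrite E at 2. apply IH.
      rewrite Hpsi, zhomV, (HAker x) by (auto; apply HLA; auto). lia. }
  assert (Ldown: forall p g, psi g <= - D -> C g (g ⋅ ginv (pw t p))).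
  { induction p; intros g Hg.
    - simpl. rewrite ginv1, mul1r. apply rt_refl.
    - eapply rt_trans; [apply Lti; auto|]. assert (E: g ⋅ ginv (pw t (S p)) = g ⋅ ginv t ⋅ ginv (pw t p)) by (simpl; gs).
      rewrite E. apply IHp. rewrite Hpsi, zhomV by auto. lia. }
  assert (Lup: forall q g, psi g + Z.of_nat q <= - D -> C g (g ⋅ pw t q)).
  { induction q; intros g Hg.
    - simpl. rewrite mul1r. apply rt_refl.
    - eapply rt_trans; [apply Lt; lia|]. rewrite pw_Sl, gmulA. apply IHq. rewrite Hpsi. lia. }
  intros x y Hx Hy.
  destruct (lower (Z.to_nat D) x Hx) as [x' [Hx' Cx]].
  destruct (lower (Z.to_nat D) y Hy) as [y' [Hy' Cy]].
  rewrite Z2Nat.id in Hx', Hy' by auto.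
  destruct (NF G t A HAsub Hconj Hgen (ginv x' ⋅ y')) as [p [b [q [Hb E]]]].
  assert (Eq: psi (ginv x' ⋅ y') = Z.of_nat q - Z.of_nat p).
  { rewrite E, !Hpsi, zhomV, !zhom_pw, (HAker b Hb), Ht by auto. lia. }
  rewrite Hpsi, zhomV in Eq by auto.
  assert (Ey: y' = x' ⋅ ginv (pw t p) ⋅ b ⋅ pw t q).
  { transitivity (x' ⋅ (ginv x' ⋅ y')); [gs|rewrite E; gs]. }
  eapply rt_trans; [exact Cx|]. eapply rt_trans; [|apply C_sym; exact Cy].
  rewrite Ey. eapply rt_trans; [apply Ldown; auto|].
  eapply rt_trans; [apply (L2 b Hb); rewrite Hpsi, zhomV, zhom_pw, Ht by auto; lia|].
  apply Lup. rewrite !Hpsi, zhomV, zhom_pw, Ht, (HAker b Hb) by auto. lia.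
Qed.
End Sig.

Lemma sigma_of_grank0 (G : Group) (psi : G -> Z) : is_Zhom psi -> grank_is psi 0 -> in_Sigma psi.
Proof.
  intros Hpsi Hg S HS.
  destruct (extract G psi Hpsi Hg) as [A [t [LA (HAsub & HLA & HAker & Ht & Hconj & Hgen)]]].
  eapply sigma_of_asc; eauto.
Qed.


Definition Wg {G : Group} (u : G) (L : list G) (K : nat) : G -> Prop :=
  gen (fun y => exists j l, (j <= K)%nat /\ In l L /\ y = ginv (pw u j) ⋅ l ⋅ pw u j).

Lemma Wg_mono (G : Group) (u : G) L K K' y : (K <= K')%nat -> Wg u L K y -> Wg u L K' y.
Proof.
  intro HK. apply gen_mono. intros x [j [l [Hj [Hl E]]]]. exists j, l. repeat split; auto. lia.
Qed.

Lemma collect (G : Group) (P : nat -> G -> Prop) :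
  (forall K K' y, (K <= K')%nat -> P K y -> P K' y) ->
  forall L0 : list G, (forall y, In y L0 -> exists K, P K y) -> exists K, forall y, In y L0 -> P K y.
Proof.
  intros Hm L0. induction L0 as [|a L0 IH]; intros H.
  - exists 0%nat. intros y [].
  - destruct (H a (or_introl eq_refl)) as [K1 H1].
    destruct IH as [K2 H2]. { intros y Hy. apply H. right; auto. }
    exists (Nat.max K1 K2). intros y [<-|Hy].
    + apply (Hm K1); auto; lia.
    + apply (Hm K2); auto; lia.
Qed.

Section Path.
Variable G : Group.
Variable psi : G -> Z.
Hypothesis Hpsi : is_Zhom psi.
Variable u : G.
Hypothesis Hu : psi u = 1.
Variable L : list G.
Hypothesis HL : forall l, In l L -> psi l = 0.

Definition kk (x : G) : nat := Z.to_nat (- psi x).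
Definition Nn (x : G) : G := x ⋅ pw u (kk x).

Notation C := (clos_refl_trans G (neg_step (u :: L) psi)).

Lemma path x y : C x y -> exists K, Wg u L K (ginv (Nn x) ⋅ Nn y).
Proof.
  intro H. induction H as [x y [hx [hy [s [Hs E]]]]|x|x y z _ [K1 IH1] _ [K2 IH2]].
  - unfold Nn. destruct Hs as [<-|Hs].
    + exists 0%nat. destruct E as [->| ->].
      * assert (Hk: kk x = S (kk (x ⋅ u))).
        { unfold kk. rewrite Hpsi, Hu in *. lia. }
        rewrite Hk, pw_Sl. assert (E: ginv (x ⋅ (u ⋅ pw u (kk (x ⋅ u)))) ⋅ (x ⋅ u ⋅ pw u (kk (x ⋅ u))) = gone) by gs.
        rewrite E. apply gen_one.
      * assert (Hk: kk y = S (kk (y ⋅ u))).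
        { unfold kk. rewrite Hpsi, Hu in *. lia. }
        rewrite Hk, pw_Sl. assert (E: ginv (y ⋅ u ⋅ pw u (kk (y ⋅ u))) ⋅ (y ⋅ (u ⋅ pw u (kk (y ⋅ u)))) = gone) by gs.
        rewrite E. apply gen_one.
    + destruct E as [->| ->].
      * assert (Hk: kk (x ⋅ s) = kk x) by (unfold kk; rewrite Hpsi, (HL s Hs); f_equal; lia).
        rewrite Hk. exists (kk x). apply gen_base. exists (kk x), s. repeat split; auto. gs.
      * assert (Hk: kk (y ⋅ s) = kk y) by (unfold kk; rewrite Hpsi, (HL s Hs); f_equal; lia).
        rewrite Hk. exists (kk y).
        assert (E: ginv (y ⋅ s ⋅ pw u (kk y)) ⋅ (y ⋅ pw u (kk y)) = ginv (ginv (pw u (kk y)) ⋅ s ⋅ pw u (kk y))) by gs.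
        rewrite E. apply gen_inv, gen_base. exists (kk y), s. repeat split; auto.
  - exists 0%nat. rewrite gmulVl. apply gen_one.
  - exists (Nat.max K1 K2).
    assert (E: ginv (Nn x) ⋅ Nn z = (ginv (Nn x) ⋅ Nn y) ⋅ (ginv (Nn y) ⋅ Nn z)) by gs.
    rewrite E. apply gen_mul; [apply (Wg_mono _ _ _ K1)|apply (Wg_mono _ _ _ K2)]; auto; lia.
Qed.

Lemma pathW y : psi y = 0 -> C gone y -> exists K, Wg u L K y.
Proof.
  intros Hy HC. destruct (path _ _ HC) as [K HK]. exists K.
  unfold Nn, kk in HK. rewrite Hy, zhom1 in HK by auto. simpl in HK.
  autorewrite with grp in HK. exact HK.
Qed.
End Path.

Definition tz {G : Group} (u : G) (z : Z) : G :=
  match z with Z0 => gone | Zpos p => pw u (Pos.to_nat p) | Zneg p => ginv (pw u (Pos.to_nat p)) end.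

Lemma phi_tz (G : Group) (phi : G -> Z) u z : is_Zhom phi -> phi (tz u z) = z * phi u.
Proof.
  intro H. destruct z; unfold tz.
  - apply zhom1; auto.
  - rewrite zhom_pw, positive_nat_Z; auto.
  - rewrite zhomV, zhom_pw, positive_nat_Z by auto. change (Z.neg p) with (- Z.pos p). ring.
Qed.

Lemma pw_gen (G : Group) (u : G) n : gen (fun x => x = u) (pw u n).
Proof. induction n; simpl; [apply gen_one|apply gen_mul; auto; apply gen_base; auto]. Qed.

Lemma tz_gen (G : Group) (u : G) z : gen (fun x => x = u) (tz u z).
Proof. destruct z; simpl; [apply gen_one|apply pw_gen|apply gen_inv, pw_gen]. Qed.

Lemma gen_ker (G : Group) (psi : G -> Z) t : is_Zhom psi -> psi t = 1 ->
  forall g, gen (fun x => psi x = 0 \/ x = t) g.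
Proof.
  intros Hpsi Ht g.
  assert (E: g = (g ⋅ ginv (tz t (psi g))) ⋅ tz t (psi g)) by gs.
  rewrite E. apply gen_mul.
  - apply gen_base. left. rewrite Hpsi, zhomV, phi_tz, Ht by auto. lia.
  - generalize (tz_gen G t (psi g)). apply gen_mono. intros x ->; auto.
Qed.

Lemma gen_ext (G : Group) (P Q : G -> Prop) : (forall x, P x <-> Q x) -> forall g, gen P g <-> gen Q g.
Proof. intros H g. split; apply gen_mono; firstorder. Qed.

Lemma grank0_of_sigma (G : Group) (phi : G -> Z) : is_Zhom phi -> (exists t, phi t = 1) ->
  (exists Lg : list G, forall g, gen (fun x => In x Lg) g) -> in_Sigma phi -> grank_is phi 0.
Proof.
  intros Hphi [t Ht] [Lg HLg] Hsig.
  set (L := map (fun x => x ⋅ tz t (- phi x)) Lg).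
  assert (HL: forall l, In l L -> phi l = 0).
  { intros l Hl. apply in_map_iff in Hl. destruct Hl as [x [<- _]].
    rewrite Hphi, phi_tz, Ht by auto. lia. }
  assert (HS: forall g, gen (fun x => In x (t :: L)) g).
  { intro g. induction (HLg g) as [x Hx| |x y _ IH1 _ IH2|x _ IH].
    - assert (E: x = (x ⋅ tz t (- phi x)) ⋅ ginv (tz t (- phi x))) by gs.
      rewrite E. apply gen_mul.
      + apply gen_base. right. apply in_map_iff. exists x; auto.
      + apply gen_inv. generalize (tz_gen G t (- phi x)). apply gen_mono. intros z ->. left; auto.
    - apply gen_one.
    - apply gen_mul; auto.
    - apply gen_inv; auto. }
  pose proof (Hsig _ HS) as Hcon.
  destruct (collect G (fun K y => Wg t L K (t ⋅ y ⋅ ginv t))) with (L0 := L) as [K HK].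
  { intros K K' y HKK'. apply Wg_mono; auto. }
  { intros y Hy. apply (pathW G phi Hphi t Ht L HL).
    - rewrite !Hphi, zhomV, (HL y Hy) by auto. lia.
    - apply Hcon; [rewrite zhom1 by auto; lia|]. rewrite !Hphi, zhomV, (HL y Hy) by auto. lia. }
  apply (grank0_of_asc G t (Wg t L K)).
  - apply gen_is_subgroup.
  - intros b Hb. induction Hb as [x [j [l [Hj [Hl ->]]]]| |x y _ IH1 _ IH2|x _ IH].
    + destruct j as [|j].
      * simpl. assert (E: t ⋅ (ginv gone ⋅ l ⋅ gone) ⋅ ginv t = t ⋅ l ⋅ ginv t) by gs.
        rewrite E. apply HK; auto.
      * assert (E: t ⋅ (ginv (pw t (S j)) ⋅ l ⋅ pw t (S j)) ⋅ ginv t = ginv (pw t j) ⋅ l ⋅ pw t j) by (simpl; gs).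
        rewrite E. apply gen_base. exists j, l. repeat split; auto. lia.
    + assert (E: t ⋅ gone ⋅ ginv t = gone) by gs. rewrite E. apply gen_one.
    + assert (E: t ⋅ (x ⋅ y) ⋅ ginv t = (t ⋅ x ⋅ ginv t) ⋅ (t ⋅ y ⋅ ginv t)) by gs.
      rewrite E. apply gen_mul; auto.
    + assert (E: t ⋅ ginv x ⋅ ginv t = ginv (t ⋅ x ⋅ ginv t)) by gs.
      rewrite E. apply gen_inv; auto.
  - intro g. generalize (HS g). apply gen_mono. intros x [<-|Hx]; [right; auto|left].
    apply gen_base. exists 0%nat, x. repeat split; auto; [lia|]. simpl; gs.
  - auto.
  - auto.
  - intros b Hb. induction Hb as [x [j [l [Hj [Hl ->]]]]| |x y _ IH1 _ IH2|x _ IH].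
    + rewrite !Hphi, zhomV, zhom_pw, (HL l Hl) by auto. lia.
    + apply zhom1; auto.
    + rewrite Hphi; lia.
    + rewrite zhomV; auto; lia.
  - split; [apply gen_is_subgroup|].
    exists (flat_map (fun j => map (fun l => ginv (pw t j) ⋅ l ⋅ pw t j) L) (seq 0 (S K))).
    apply gen_ext. intro x. rewrite in_flat_map. split.
    + intros [j [l [Hj [Hl ->]]]]. exists j. split; [apply in_seq; lia|]. apply in_map_iff. exists l; auto.
    + intros [j [Hj Hx]]. apply in_seq in Hj. apply in_map_iff in Hx. destruct Hx as [l [<- Hl]].
      exists j, l. repeat split; auto. lia.
Qed.


Lemma ker_subgroup (G : Group) (phi : G -> Z) : is_Zhom phi -> is_subgroup (fun g => phi g = 0).
Proof.
  intro H. split; [apply zhom1; auto|]. split.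
  - intros x y Hx Hy. rewrite H; lia.
  - intros x Hx. rewrite zhomV; auto; lia.
Qed.

Lemma kernel_fg_of_both (G : Group) (phi : G -> Z) : is_Zhom phi -> grank_is phi 0 ->
  grank_is (fun g => - phi g) 0 -> fg_subgroup (fun g => phi g = 0).
Proof.
  intros Hphi H1 H2.
  destruct (extract G phi Hphi H1) as [A [t [LA (HAsub & HLA & HAker & Ht & Hconj & Hgen)]]].
  assert (Hpsi: is_Zhom (fun g => - phi g)) by (intros a b; rewrite Hphi; lia).
  pose proof (sigma_of_grank0 G _ Hpsi H2) as Hsig.
  destruct HAsub as [A1 [Am Ai]].
  assert (HS: forall g, gen (fun x => In x (ginv t :: LA)) g).
  { intro g. induction (Hgen g) as [x [Hx| ->]| |x y _ IH1 _ IH2|x _ IH].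
    - apply HLA in Hx. revert Hx. apply gen_mono. intros z Hz; right; auto.
    - pose proof (@gen_inv G _ _ (@gen_base G (fun x => In x (ginv t :: LA)) (ginv t) (or_introl eq_refl))) as Hx. rewrite ginvK in Hx. exact Hx.
    - apply gen_one.
    - apply gen_mul; auto.
    - apply gen_inv; auto. }
  pose proof (Hsig _ HS) as Hcon.
  assert (Hu: - phi (ginv t) = 1) by (rewrite zhomV; auto; lia).
  assert (HL: forall l, In l LA -> - phi l = 0).
  { intros l Hl. rewrite HAker; auto. apply HLA, gen_base; auto. }
  assert (Hcp: forall j l, A l -> A (ginv (pw (ginv t) j) ⋅ l ⋅ pw (ginv t) j)).
  { induction j; intros l Hl.
    - simpl. assert (E: ginv gone ⋅ l ⋅ gone = l) by gs. rewrite E; auto.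
    - assert (E: ginv (pw (ginv t) (S j)) ⋅ l ⋅ pw (ginv t) (S j) =
                 t ⋅ (ginv (pw (ginv t) j) ⋅ l ⋅ pw (ginv t) j) ⋅ ginv t) by (simpl; gs).
      rewrite E. auto. }
  assert (HWA: forall K y, Wg (ginv t) LA K y -> A y).
  { intros K y Hy. induction Hy as [x [j [l [Hj [Hl ->]]]]| |x y _ IH1 _ IH2|x _ IH]; auto.
    apply Hcp. apply HLA, gen_base; auto. }
  assert (Hinv1: forall a, In a LA -> A (ginv t ⋅ a ⋅ t)).
  { intros a Ha.
    destruct (pathW G _ Hpsi (ginv t) Hu LA HL (ginv t ⋅ a ⋅ ginv (ginv t))) as [K HK].
    - pose proof (HL a Ha). cbv beta in *. rewrite !Hphi, !zhomV by auto. lia.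
    - pose proof (HL a Ha). apply Hcon; cbv beta in *; [rewrite zhom1 by auto; lia|]. rewrite !Hphi, !zhomV by auto. lia.
    - apply HWA in HK. rewrite ginvK in HK. auto. }
  assert (Hinv: forall a, A a -> A (ginv t ⋅ a ⋅ t)).
  { intros a Ha. apply HLA in Ha. induction Ha as [x Hx| |x y _ IH1 _ IH2|x _ IH].
    - auto.
    - assert (E: ginv t ⋅ gone ⋅ t = gone) by gs. rewrite E; auto.
    - assert (E: ginv t ⋅ (x ⋅ y) ⋅ t = (ginv t ⋅ x ⋅ t) ⋅ (ginv t ⋅ y ⋅ t)) by gs. rewrite E; auto.
    - assert (E: ginv t ⋅ ginv x ⋅ t = ginv (ginv t ⋅ x ⋅ t)) by gs. rewrite E; auto. }
  assert (Hpw: forall p b, A b -> A (ginv (pw t p) ⋅ b ⋅ pw t p)).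
  { induction p; intros b Hb.
    - simpl. assert (E: ginv gone ⋅ b ⋅ gone = b) by gs. rewrite E; auto.
    - assert (E: ginv (pw t (S p)) ⋅ b ⋅ pw t (S p) = ginv t ⋅ (ginv (pw t p) ⋅ b ⋅ pw t p) ⋅ t) by (simpl; gs).
      rewrite E. auto. }
  assert (Hker: forall g, phi g = 0 -> A g).
  { intros g Hg. destruct (NF G t A (conj A1 (conj Am Ai)) Hconj Hgen g) as [p [b [q [Hb E]]]].
    assert (Eq: p = q).
    { rewrite E, !Hphi, zhomV, !zhom_pw, (HAker b Hb), Ht in Hg by auto. lia. }
    subst. auto. }
  split; [apply ker_subgroup; auto|]. exists LA. intro g. rewrite <- HLA. split; auto.
Qed.

Theorem lemma3p2 (G : Group) (phi : G -> Z) :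
  finitely_presented G -> epi_Z phi ->
  (grank_is phi 0 <-> in_Sigma phi) /\
  ((grank_is phi 0 /\ grank_is (fun g => - phi g) 0) <->
     fg_subgroup (fun g => phi g = 0)).
Proof.
  intros [n [s [rels [_ [Hgs _]]]]] [Hphi Hsurj].
  assert (Hfg: exists Lg : list G, forall g, gen (fun x => In x Lg) g).
  { exists (map s (seq 0 n)). intro g. generalize (Hgs g). apply gen_mono.
    intros x [i [Hi ->]]. apply in_map, in_seq. lia. }
  destruct (Hsurj 1) as [t Ht]. destruct (Hsurj (-1)) as [t' Ht'].
  assert (Hpsi: is_Zhom (fun g => - phi g)) by (intros a b; rewrite Hphi; lia).
  split; split.
  - apply sigma_of_grank0; auto.
  - apply grank0_of_sigma; eauto.
  - intros [H1 H2]. apply kernel_fg_of_both; auto.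
  - intro Hk. split.
    + apply (grank0_of_asc G t (fun g => phi g = 0)); auto.
      * apply ker_subgroup; auto.
      * intros b Hb. rewrite !Hphi, zhomV, Ht, Hb by auto. lia.
      * apply gen_ker; auto.
    + apply (grank0_of_asc G t' (fun g => phi g = 0)); auto.
      * apply ker_subgroup; auto.
      * intros b Hb. rewrite !Hphi, zhomV, Ht', Hb by auto. lia.
      * intro g. generalize (gen_ker G _ t' Hpsi ltac:(simpl; lia) g). apply gen_mono.
        intros x [Hx|Hx]; [left; lia|right; auto].
      * cbv beta. lia.
      * intros b Hb. cbv beta. lia.
Qed.
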